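(* Every proper list system admits a fair distribution.
   Context: Let $\mathbb{N}_k := \{0,1,\ldots,k-1\}$. A list system is a triple $(S,T,\mathcal{L})$, where $S$ is a set of $n_1 := |S|$ source nodes, $T$ is a set of $n_2 := |T|$ target nodes, and $\mathcal{L}: S\times \mathbb{N}_{\Delta_1} \to S$ assigns to every source node $s\in S$ a list $L_s$ of $\Delta_1 \le n_2$ not necessarily distinct elements of $S$. For $s,s'\in S$, $l(s,s')$ denotes how many times $s'$ appears in the list $L_s$. A list system is called proper when $n_2$ divides $n_1\Delta_1$ and $\sum_{s\in S} l(s,s') = \Delta_1$ for every $s'\in S$. Let $\Delta_2 := \frac{n_1\Delta_1}{n_2}$. A fair distribution is an assignment $f: S\times\mathbb{N}_{\Delta_1}\to T$ such that: (1) $|\{f(s,i) : i\in\mathbb{N}_{\Delta_1}\}| = \Delta_1$ for every $s\in S$; (2) $|\{(s,i)\in S\times\mathbb{N}_{\Delta_1} : f(s,i)=t\}| = \Delta_2$ for every $t\in T$; (3) if $(s_1,i_1)\neq(s_2,i_2)$ and $\mathcal{L}(s_1,i_1)=\mathcal{L}(s_2,i_2)$, then $f(s_1,i_1)\neq f(s_2,i_2)$, for all $s_1,s_2\in S$ and $i_1,i_2\in\mathbb{N}_{\Delta_1}$. *)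

(* Defs.v *)
From mathcomp Require Import all_boot.
Set Implicit Arguments. Unset Strict Implicit. Unset Printing Implicit Defensive.

(* A list system (S, T, L): S, T finite sets of source / target nodes,
   L : S x N_{d1} -> S assigns to each source s the list L_s = (L s i)_{i < d1}. *)

Definition lmult (S : finType) (d1 : nat) (L : S -> 'I_d1 -> S) (s s' : S) : nat :=
  #|[set i : 'I_d1 | L s i == s']|.

Definition list_system (S T : finType) (d1 : nat) (L : S -> 'I_d1 -> S) : Prop :=
  d1 <= #|T|.

Definition proper_list_system (S T : finType) (d1 : nat) (L : S -> 'I_d1 -> S) : Prop :=
  list_system T L /\
  (#|T| %| #|S| * d1) /\
  (forall s' : S, \sum_(s : S) lmult L s s' = d1).

Definition delta2 (S T : finType) (d1 : nat) : nat := (#|S| * d1) %/ #|T|.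

Definition fair_distribution (S T : finType) (d1 : nat) (L : S -> 'I_d1 -> S)
  (f : S -> 'I_d1 -> T) : Prop :=
  (* (1) *) (forall s : S, #|[set f s i | i : 'I_d1]| = d1) /\
  (* (2) *) (forall t : T, #|[set p : S * 'I_d1 | f p.1 p.2 == t]| = delta2 S T d1) /\
  (* (3) *) (forall (s1 s2 : S) (i1 i2 : 'I_d1),
               (s1, i1) <> (s2, i2) -> L s1 i1 = L s2 i2 -> f s1 i1 <> f s2 i2).

(* Main.v *)
Require Import Defs.
From mathcomp Require Import all_boot.
From mathcomp Require Import zify.
Set Implicit Arguments. Unset Strict Implicit. Unset Printing Implicit Defensive.

Section Hall.
Variables (TX TY : finType) (E : TX -> TY -> bool) (y0 : TY).

Definition NB (A : {set TX}) (Y : {set TY}) := [set y in Y | [exists x in A, E x y]].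

Lemma hall n : forall (X : {set TX}) (Y : {set TY}), #|X| <= n ->
  (forall A : {set TX}, A \subset X -> #|A| <= #|NB A Y|) ->
  exists f : TX -> TY, {in X &, injective f} /\ {in X, forall x, (f x \in Y) && E x (f x)}.
Proof.
elim: n => [|n IH] X Y hX hH.
  exists (fun _ => y0); split => x; move: hX; rewrite leqn0 cards_eq0 => /eqP -> ;
    by rewrite inE.
case: (set_0Vmem X) => [X0|[x0 x0X]].
  by exists (fun _ => y0); split => x; rewrite X0 inE.
case: (boolP [exists A : {set TX}, [&& A \proper X, A != set0 & #|NB A Y| <= #|A|]]).
  case/existsP => A /and3P [pAX nA0 tA].
  have sAX : A \subset X by apply: proper_sub.
  have [f1 [i1 h1]] : exists f : TX -> TY, {in A &, injective f} /\ {in A, forall x, (f x \in Y) && E x (f x)}.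
    apply: IH => [|B sBA]; last by apply: hH; apply: subset_trans sAX.
    have := proper_card pAX; lia.
  pose X2 := X :\: A; pose Y2 := Y :\: NB A Y.
  have [f2 [i2 h2]] : exists f : TX -> TY, {in X2 &, injective f} /\ {in X2, forall x, (f x \in Y2) && E x (f x)}.
    apply: IH => [|B sBX2].
      rewrite /X2 cardsD (setIidPr sAX).
      have : 0 < #|A| by rewrite card_gt0.
      have := subset_leq_card sAX; lia.
    have sBX : B \subset X by apply: subset_trans sBX2 (subsetDl _ _).
    have dAB : [disjoint A & B].
      rewrite -setI_eq0; apply/eqP/setP => x; rewrite !inE.
      apply/negP => /andP [xA xB]; have := subsetP sBX2 x xB; by rewrite !inE xA.
    have hU : #|A :|: B| = #|A| + #|B| by rewrite cardsU (disjoint_setI0 dAB) cards0 subn0.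
    have sub : NB (A :|: B) Y \subset NB A Y :|: NB B Y2.
      apply/subsetP => y; rewrite !inE => /andP [yY /existsP [x /andP [xAB Exy]]].
      rewrite yY /=; case yN : [exists x0, (x0 \in A) && E x0 y] => //=.
      apply/existsP; exists x; move: xAB; rewrite inE => /orP [xA|-> //].
      by move: yN => /existsP []; exists x; rewrite xA.
    have := subset_leq_card sub; rewrite cardsU.
    have : A :|: B \subset X by rewrite subUset sAX.
    move/hH; rewrite hU; lia.
  exists (fun x => if x \in A then f1 x else f2 x); split.
    move=> x x' xX x'X /=.
    case: ifP => xA; case: ifP => x'A.
    - by apply: i1.
    - move=> e; have := h2 x'; rewrite !inE x'A x'X => /(_ isT) /andP [/andP [/negP nN _] _].
      case: nN; rewrite -e.
      by have := h1 x xA; case/andP => -> E1; rewrite andTb; apply/existsP; exists x; rewrite xA.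
    - move=> e; have := h2 x; rewrite !inE xA xX => /(_ isT) /andP [/andP [/negP nN _] _].
      case: nN; rewrite e.
      by have := h1 x' x'A; case/andP => -> E1; rewrite andTb; apply/existsP; exists x'; rewrite x'A.
    - by apply: i2; rewrite !inE ?xA ?x'A.
  move=> x xX /=; case: ifP => xA; first by apply: h1.
  have := h2 x; rewrite !inE xA xX => /(_ isT) /andP [].
  by move=> /andP [_ ->] ->.
rewrite negb_exists => /forallP hnt.
have : #|[set x0]| <= #|NB [set x0] Y| by apply: hH; rewrite sub1set.
rewrite cards1 card_gt0 => /set0Pn [y1]; rewrite inE => /andP [y1Y /existsP [z /andP [] ]].
rewrite inE => /eqP -> Ex0y1; clear z.
pose X2 := X :\ x0; pose Y2 := Y :\ y1.
have [f2 [i2 h2]] : exists f : TX -> TY, {in X2 &, injective f} /\ {in X2, forall x, (f x \in Y2) && E x (f x)}.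
  apply: IH => [|B sBX2].
    by move: hX; rewrite (cardsD1 x0 X) x0X.
  case: (set_0Vmem B) => [->|[b bB]]; first by rewrite cards0.
  have sBX : B \subset X by apply: subset_trans sBX2 (subsetDl _ _).
  have x0B : x0 \notin B by apply/negP => /(subsetP sBX2); rewrite !inE eqxx.
  have pBX : B \proper X by apply/properP; split => //; exists x0.
  have := hnt B; rewrite pBX /=; have -> : (B != set0) by apply/set0Pn; exists b.
  rewrite /= -ltnNge => lt.
  have sub : NB B Y \subset y1 |: NB B Y2.
    apply/subsetP => y; rewrite !inE => /andP [yY ->]; rewrite yY.
    by case: (y == y1).
  have := subset_leq_card sub; rewrite cardsU1; case: (y1 \notin _) => /=; lia.
exists (fun x => if x == x0 then y1 else f2 x); split.
  move=> x x' xX x'X /=.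
  case: eqP => xx0; case: eqP => x'x0.
  - by rewrite xx0 x'x0.
  - move=> e; have := h2 x'; rewrite !inE x'X andbT => /(_ (introN eqP x'x0)) /andP [].
    by rewrite -e eqxx.
  - move=> e; have := h2 x; rewrite !inE xX andbT => /(_ (introN eqP xx0)) /andP [].
    by rewrite e eqxx.
  - by apply: i2; rewrite !inE ?xX ?x'X andbT; apply/eqP.
move=> x xX /=; case: eqP => [->|xx0]; first by rewrite y1Y.
have := h2 x; rewrite !inE xX andbT => /(_ (introN eqP xx0)) /andP [].
by move=> /andP [_ ->] ->.
Qed.
End Hall.

Lemma card_fiber (E V : finType) (P : pred E) (g : E -> V) (B : {set V}) :
  #|[set e | P e && (g e \in B)]| = \sum_(v in B) #|[set e | P e && (g e == v)]|.
Proof.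
rewrite -sum1dep_card (partition_big g (mem B)) /=; last by move=> e /andP [].
apply: eq_bigr => v vB; rewrite -sum1dep_card; apply: eq_bigl => e.
by case: eqP => [->|]; rewrite ?vB ?andbT ?andbF.
Qed.

Lemma cardsDsub (E : finType) (F M : {set E}) (P : pred E) : M \subset F ->
  #|[set e in F :\: M | P e]| = #|[set e in F | P e]| - #|[set e in M | P e]|.
Proof.
move=> sMF; have -> : [set e in F :\: M | P e] = [set e in F | P e] :\: [set e in M | P e].
  by apply/setP => e; rewrite !inE; case: (e \in M) (P e) (e \in F) => [] [] [].
rewrite cardsD; congr (_ - _); apply: eq_card => e; rewrite !inE.
case: (boolP (e \in M)) => eM; rewrite ?(subsetP sMF e eM) /=; case: (P e); by rewrite ?andbF.
Qed.

Section Konig.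
Variables (V E : finType) (l r : E -> V).

Lemma pmatch k (F : {set E}) :
  (forall v, #|[set e in F | l e == v]| = k.+1) -> (forall v, #|[set e in F | r e == v]| = k.+1) ->
  exists M : {set E}, M \subset F /\
    forall v, #|[set e in M | l e == v]| = 1 /\ #|[set e in M | r e == v]| = 1.
Proof.
move=> hl hr.
case: (pickP (@predT V)) => [y0 _|V0]; last first.
  by exists set0; split; [apply: sub0set | move=> v; have := V0 v].
pose Ed x y := [exists e in F, (l e == x) && (r e == y)].
have [f [fi fh]] : exists f : V -> V, {in [set: V] &, injective f} /\
    {in [set: V], forall x, (f x \in [set: V]) && Ed x (f x)}.
  apply: (@hall V V Ed y0 #|[set: V]| [set: V] [set: V] (leqnn _)) => A _.
  rewrite -(@leq_pmul2r k.+1) // -!sum_nat_const.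
  rewrite (eq_bigr (fun v => #|[set e | (e \in F) && (l e == v)]|)); last by move=> v _; rewrite hl.
  rewrite [X in _ <= X](eq_bigr (fun v => #|[set e | (e \in F) && (r e == v)]|)); last by move=> v _; rewrite hr.
  rewrite -!card_fiber; apply: subset_leq_card; apply/subsetP => e; rewrite !inE => /andP [eF leA].
  rewrite eF /=; apply/existsP; exists (l e); rewrite leA /=; apply/existsP; exists e.
  by rewrite eF !eqxx.
have fI : injective f by move=> x y; apply: fi; rewrite inE.
have exE : forall x, exists e, (e \in F) && (l e == x) && (r e == f x).
  move=> x; have := fh x; rewrite inE => /(_ isT) /andP [_ /existsP [e /andP [eF /andP [h1 h2]]]].
  by exists e; rewrite eF h1 h2.
pose g x := xchoose (exE x).
have gP : forall x, [/\ g x \in F, l (g x) = x & r (g x) = f x].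
  move=> x; have := xchooseP (exE x); rewrite -/(g x) => /andP [/andP [-> /eqP ->] /eqP ->]; done.
exists [set g x | x in V]; split.
  by apply/subsetP => e /imsetP [x _ ->]; case: (gP x).
move=> v; split; apply/eqP/cards1P.
  exists (g v); apply/setP => e; rewrite !inE; apply/andP/eqP.
    by case => /imsetP [x _ ->] /eqP; case: (gP x) => _ -> _ ->.
  by move=> ->; split; [apply: imset_f | case: (gP v) => _ -> _].
have [x fx] : exists x, f x = v.
  have := @inj_card_onto _ _ f fI (leqnn _) v; case/codomP => x ->; by exists x.
exists (g x); apply/setP => e; rewrite !inE; apply/andP/eqP.
  case => /imsetP [x' _ ->] /eqP; case: (gP x') => _ _ ->; rewrite -fx => /fI -> //.
by move=> ->; split; [apply: imset_f | case: (gP x) => _ _ ->; rewrite fx].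
Qed.

Lemma konig k : forall F : {set E},
  (forall v, #|[set e in F | l e == v]| = k) -> (forall v, #|[set e in F | r e == v]| = k) ->
  exists c : E -> nat, (forall e, e \in F -> c e < k) /\
    (forall v j, j < k -> #|[set e in F | (l e == v) && (c e == j)]| = 1 /\
                          #|[set e in F | (r e == v) && (c e == j)]| = 1).
Proof.
elim: k => [|k IH] F hl hr.
  exists (fun _ => 0); split => // e eF.
  have : 0 < #|[set e0 in F | l e0 == l e]| by apply/card_gt0P; exists e; rewrite inE eF eqxx.
  by rewrite hl.
have [M [sMF hM]] := pmatch hl hr.
have [c [cF cH]] : exists c : E -> nat, (forall e, e \in F :\: M -> c e < k) /\
    (forall v j, j < k -> #|[set e in F :\: M | (l e == v) && (c e == j)]| = 1 /\
                          #|[set e in F :\: M | (r e == v) && (c e == j)]| = 1).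
  apply: IH => v.
    by rewrite (cardsDsub (fun e => l e == v) sMF) hl (proj1 (hM v)) subn1.
  by rewrite (cardsDsub (fun e => r e == v) sMF) hr (proj2 (hM v)) subn1.
exists (fun e => if e \in M then k else c e); split.
  move=> e eF; case: ifP => eM //; apply: ltnW; apply: cF; by rewrite inE eM.
have key : forall g : E -> V, forall v j, j < k.+1 ->
    #|[set e in M | g e == v]| = 1 ->
    (j < k -> #|[set e in F :\: M | (g e == v) && (c e == j)]| = 1) ->
    #|[set e in F | (g e == v) && ((if e \in M then k else c e) == j)]| = 1.
  move=> g v j; rewrite ltnS leq_eqVlt => /orP [/eqP ->|jk] h1 h2.
    rewrite -h1; apply: eq_card => e; rewrite !inE.
    case eM: (e \in M); first by rewrite eqxx andbT (subsetP sMF).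
    case eF: (e \in F) => //=; have := cF e; rewrite inE eM eF => /(_ isT).
    by case: (c e =P k) => [->|]; rewrite ?ltnn ?andbF.
  rewrite -(h2 jk); apply: eq_card => e; rewrite !inE.
  case eM: (e \in M) => /=; last by [].
  by move: jk; case: (k =P j) => [->|]; rewrite ?ltnn ?andbF.
move=> v j jk; split; apply: key => //; try by case: (hM v).
  by move=> /(cH v j) [].
by move=> /(cH v j) [].
Qed.
End Konig.

Lemma card_ind (A : finType) (P : pred A) : #|[set x | P x]| = \sum_x (P x : nat).
Proof. rewrite -sum1dep_card big_mkcond /=; apply: eq_bigr => x _; by case: (P x). Qed.

Lemma sum_eq1 (A : finType) (s : A) (b : A -> nat) :
  \sum_(a : A) ((a == s) * b a) = b s.
Proof.
rewrite (bigD1 s) //= eqxx mul1n big1 ?addn0 // => a /negbTE ->; by rewrite mul0n.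
Qed.

Lemma sum_fst (A B : finType) (s : A) : \sum_(p : A * B) ((p.1 == s) : nat) = #|B|.
Proof.
rewrite -(pair_bigA _ (fun a (_ : B) => ((a == s) : nat))) /=.
rewrite (bigD1 s) //= eqxx sum_nat_const muln1 big1 ?addn0 // => a /negbTE ->.
by rewrite big1.
Qed.

Lemma card1_eq (E : finType) (A : {set E}) x y : #|A| = 1 -> x \in A -> y \in A -> x = y.
Proof. by move/eqP/cards1P => [z ->]; rewrite !inE => /eqP -> /eqP ->. Qed.

Lemma nth_enum_eq (T : finType) x0 n t : n < #|T| ->
  (nth x0 (enum T) n == t) = (n == index t (enum T)).
Proof.
move=> hn; rewrite cardE in hn; apply/eqP/eqP => [<-|->].
  by rewrite index_uniq // enum_uniq.
by rewrite nth_index // mem_enum.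
Qed.

Lemma inl_eq (A B : eqType) (x y : A) : (inl x == inl y :> A + B) = (x == y).
Proof. by []. Qed.
Lemma inr_eq (A B : eqType) (x y : B) : (inr x == inr y :> A + B) = (x == y).
Proof. by []. Qed.

Lemma sum_pick (A : finType) (x : A) (b : bool) : \sum_(s : A) ((x == s) && b : nat) = b.
Proof.
rewrite (bigD1 x) //= eqxx big1 ?addn0 // => s; rewrite eq_sym => /negbTE ->; done.
Qed.

Theorem theorem1 (S T : finType) (d1 : nat) (L : S -> 'I_d1 -> S) :
  proper_list_system T L ->
  exists f : S -> 'I_d1 -> T, fair_distribution L f.
Proof.
case=> [hd [hdiv hsum]]; rewrite /list_system in hd.
set n1 := #|S|; set n2 := #|T|.
set D := delta2 S T d1.
have hD : D * n2 = n1 * d1 by rewrite /D /delta2 divnK.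
have Dle : D <= n1.
  case: (posnP n2) => [n20|n2p]; first by rewrite /D /delta2 -/n2 n20 divn0.
  rewrite -(leq_pmul2r n2p) hD; exact: leq_mul.
set a := n1 - D; set m := n2 - d1.
have eqc : #|{: S * 'I_m}| = #|{: 'I_a * 'I_n2}|.
  rewrite !card_prod !card_ord -/n1 /a /m mulnBl mulnBr -hD; done.
pose phi (p : S * 'I_m) : 'I_a * 'I_n2 := enum_val (cast_ord eqc (enum_rank p)).
pose psi (q : 'I_a * 'I_n2) : S * 'I_m := enum_val (cast_ord (esym eqc) (enum_rank q)).
have phiK : cancel phi psi by move=> p; rewrite /phi /psi enum_valK cast_ordK enum_rankK.
have psiK : cancel psi phi by move=> p; rewrite /phi /psi enum_valK cast_ordKV enum_rankK.
pose V := (S + 'I_a)%type.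
pose E := (S * 'I_d1 + ((S * 'I_m) + (S * 'I_m)))%type.
pose l (e : E) : V := match e with inl p => inl p.1 | inr (inl p) => inl p.1 | inr (inr p) => inr (phi p).1 end.
pose r (e : E) : V := match e with inl p => inl (L p.1 p.2) | inr (inl p) => inr (phi p).1 | inr (inr p) => inl p.1 end.
have eqT : forall P : pred E, [set e in [set: E] | P e] = [set e | P e].
  by move=> P; apply/setP => e; rewrite !inE.
have sphi : forall u : 'I_a, \sum_(p : S * 'I_m) (((phi p).1 == u) : nat) = n2.
  move=> u; rewrite (reindex psi) /=; last by apply: onW_bij; exists phi.
  by under eq_bigr do rewrite psiK; rewrite sum_fst card_ord.
have hl : forall v, #|[set e in [set: E] | l e == v]| = n2.
  move=> v; rewrite eqT card_ind big_sumType big_sumType /=.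
  case: v => [s|u] /=; rewrite !big1_eq.
    by under eq_bigr do rewrite inl_eq; under [X in _ + (X + _)]eq_bigr do rewrite inl_eq;
      rewrite !sum_fst !card_ord addn0 /m subnKC.
  by under eq_bigr do rewrite inr_eq; rewrite sphi.
have hr : forall v, #|[set e in [set: E] | r e == v]| = n2.
  move=> v; rewrite eqT card_ind big_sumType big_sumType /=.
  case: v => [s|u] /=; rewrite !big1_eq.
    under eq_bigr do rewrite inl_eq; under [X in _ + (_ + X)]eq_bigr do rewrite inl_eq.
    rewrite add0n sum_fst card_ord.
    have -> : \sum_(p : S * 'I_d1) ((L p.1 p.2 == s) : nat) = d1.
      rewrite -(pair_bigA _ (fun x i => ((L x i == s) : nat))).
      transitivity (\sum_x lmult L x s); last exact: hsum.
      by apply: eq_bigr => x _; rewrite /lmult card_ind.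
    by rewrite /m subnKC.
  by under [X in _ + (X + _)]eq_bigr do rewrite inr_eq; rewrite sphi addn0.
have [c [cF cH]] := @konig V E l r n2 [set: E] hl hr.
have cE : forall e, c e < n2 by move=> e; apply: cF; rewrite inE.
have cH' : forall v j, j < n2 -> #|[set e | (l e == v) && (c e == j)]| = 1 /\
    #|[set e | (r e == v) && (c e == j)]| = 1.
  by move=> v j hj; have := cH v j hj; rewrite !eqT.
have ul : forall e e', l e = l e' -> c e = c e' -> e = e'.
  move=> e e' hl' hc; have [h _] := cH' (l e) (c e) (cE e); apply: (card1_eq h); rewrite inE.
    by rewrite !eqxx.
  by rewrite hl' hc !eqxx.
have ur : forall e e', r e = r e' -> c e = c e' -> e = e'.
  move=> e e' hl' hc; have [_ h] := cH' (r e) (c e) (cE e); apply: (card1_eq h); rewrite inE.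
    by rewrite !eqxx.
  by rewrite hl' hc !eqxx.
have fnth : forall x0 x1 n n', n < n2 -> n' < n2 -> nth x0 (enum T) n = nth x1 (enum T) n' -> n = n'.
  move=> x0 x1 n n' hn hn' e.
  have h1 : n = index (nth x1 (enum T) n') (enum T) by apply/eqP; rewrite -(nth_enum_eq x0) // e.
  have h2 : n' = index (nth x1 (enum T) n') (enum T) by apply/eqP; rewrite -(nth_enum_eq x1).
  by rewrite {1}h1 -h2.
exists (fun s i => nth (enum_val (widen_ord hd i)) (enum T) (c (inl (s, i)))).
split; last split.
- move=> s; rewrite card_imset ?card_ord // => i i' /fnth h.
  by have := ul (inl (s, i)) (inl (s, i')) erefl (h (cE _) (cE _)); case.
- move=> t; set j := index t (enum T).
  have hj : j < n2 by rewrite /j /n2 cardE index_mem mem_enum.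
  transitivity #|[set p : S * 'I_d1 | c (inl p) == j]|.
    by apply: eq_card => p; rewrite !inE nth_enum_eq // -surjective_pairing.
  rewrite card_ind -/D.
  have inL : forall e : E, \sum_(s : S) ((l e == inl s) && (c e == j) : nat) =
      match e with inr (inr _) => 0 | _ => (c e == j : nat) end.
    case=> [p|[p|p]] /=; rewrite ?sum_pick //.
    by rewrite big1.
  have inR : forall e : E, \sum_(u : 'I_a) ((r e == inr u) && (c e == j) : nat) =
      match e with inr (inl _) => (c e == j : nat) | _ => 0 end.
    case=> [p|[p|p]] /=; rewrite ?sum_pick //; by rewrite big1.
  have hA : \sum_(s : S) \sum_(e : E) ((l e == inl s) && (c e == j) : nat) = n1.
    rewrite (eq_bigr (fun _ => 1)) ?sum_nat_const ?muln1 // => s _.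
    by rewrite -(card_ind (fun e => (l e == inl s) && (c e == j))); case: (cH' (inl s) j hj).
  have hB : \sum_(u : 'I_a) \sum_(e : E) ((r e == inr u) && (c e == j) : nat) = a.
    rewrite (eq_bigr (fun _ => 1)) ?sum_nat_const ?muln1 ?card_ord // => u _.
    by rewrite -(card_ind (fun e => (r e == inr u) && (c e == j))); case: (cH' (inr u) j hj).
  rewrite exchange_big /= (eq_bigr _ (fun e _ => inL e)) big_sumType big_sumType /= big1_eq addn0 in hA.
  rewrite exchange_big /= (eq_bigr _ (fun e _ => inR e)) big_sumType big_sumType /= !big1_eq addn0 add0n in hB.
  rewrite hB in hA; by rewrite -[LHS](addnK a) hA /a subKn.
- move=> s1 s2 i1 i2 ne eL /fnth h.
  have := ur (inl (s1, i1)) (inl (s2, i2)); rewrite /= eL => /(_ erefl (h (cE _) (cE _))).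
  by case=> e1 e2; apply: ne; rewrite e1 e2.
Qed.
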